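(* Let $\mathbf{p}_0,\ldots,\mathbf{p}_d\in\mathbb{R}^d$ be $d+1$ points not contained in any $(d-1)$-dimensional affine subspace, let $\lambda_0,\ldots,\lambda_d\in(0,1)$, and let $S_i(\mathbf{x})=\lambda_i\mathbf{x}+(1-\lambda_i)\mathbf{p}_i$ for $i=0,\ldots,d$. If $\sum_{i=0}^d\lambda_i\ge d$, then the unique non-empty compact set $X$ with $X=\bigcup_{i=0}^dS_i(X)$ equals the convex hull $\mathrm{conv}(\{\mathbf{p}_0,\ldots,\mathbf{p}_d\})$. *)

(* Defs.v *)
From HB Require Import structures.
From mathcomp Require Import all_boot all_order all_algebra.
From mathcomp Require Import all_classical all_reals all_analysis.
Set Implicit Arguments. Unset Strict Implicit. Unset Printing Implicit Defensive.
Import Order.TTheory GRing.Theory Num.Theory.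
Import numFieldNormedType.Exports.
Local Open Scope ring_scope.
Local Open Scope classical_set_scope.

(* The points p_0,...,p_d are not contained in any (d-1)-dimensional affine
   subspace, i.e. in no affine hyperplane {x | <a,x> = c} with a <> 0. *)
Definition not_in_hyperplane (R : realType) (d : nat) (p : 'I_d.+1 -> 'rV[R]_d) : Prop :=
  ~ exists (a : 'rV[R]_d) (c : R), a != 0 /\
      forall i, \sum_(k < d) a ord0 k * p i ord0 k = c.

Definition conv_hull (R : realType) (d n : nat) (p : 'I_n -> 'rV[R]_d) : set 'rV[R]_d :=
  [set x | exists t : 'I_n -> R, (forall i, 0 <= t i) /\ \sum_(i < n) t i = 1 /\
                                 x = \sum_(i < n) t i *: p i].

Definition Smap (R : realType) (d : nat) (lam : R) (q : 'rV[R]_d) (x : 'rV[R]_d) : 'rV[R]_d :=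
  lam *: x + (1 - lam) *: q.

(* Main.v *)
Require Import Defs.
From HB Require Import structures.
From mathcomp Require Import all_boot all_order all_algebra.
From mathcomp Require Import all_classical all_reals all_analysis.
From mathcomp Require Import lra.
Import Order.TTheory GRing.Theory Num.Theory.
Import numFieldNormedType.Exports.
Local Open Scope ring_scope.
Local Open Scope classical_set_scope.
Set Implicit Arguments. Unset Strict Implicit.

Lemma bounded_ex (R : realType) (d : nat) (B : set 'rV[R]_d) :
  bounded_set B -> exists M : R, forall b, B b -> `|b| <= M.
Proof.
move=> [M [_ HM]]; exists (M + 1); apply: HM.
by rewrite ltrDl.
Qed.

Lemma attract (R : realType) (d n : nat) (A B : set 'rV[R]_d)
  (lam : 'I_n -> R) (q : 'I_n -> 'rV[R]_d) :
  (forall i, 0 < lam i < 1) -> closed A -> A !=set0 -> bounded_set B ->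
  (forall i a, A a -> A (Smap (lam i) (q i) a)) ->
  (forall b, B b -> exists i b', B b' /\ b = Smap (lam i) (q i) b') ->
  B `<=` A.
Proof.
move=> hlam Acl [a0 Aa0] /bounded_ex [M HM] AS BS.
pose L := \big[Order.max/0]_i lam i.
have L1 : L < 1.
  by apply/bigmax_ltP; split => // i _; case/andP: (hlam i).
have leL i : lam i <= L by apply: le_bigmax.
pose Dist b := inf [set `|b - a| | a in A].
have Dne b : [set `|b - a| | a in A] !=set0 by exists `|b - a0|, a0.
have Dlb b : has_lbound [set `|b - a| | a in A].
  by exists 0 => _ [a _ <-].
have D1 b a : A a -> Dist b <= `|b - a|.
  by move=> Aa; apply: ge_inf => //; exists a.
have D0 b : 0 <= Dist b.
  by apply: lb_le_inf => // _ [a _ <-].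
have D3 i b : Dist (Smap (lam i) (q i) b) <= lam i * Dist b.
  have /andP[l0 _] := hlam i.
  rewrite -ler_pdivrMl //; apply: lb_le_inf => // _ [a Aa <-].
  rewrite ler_pdivrMl //; apply: le_trans (D1 _ _ (AS i a Aa)) _.
  rewrite /Smap opprD addrACA subrr addr0 -scalerBr normrZ.
  by rewrite ger0_norm ?(ltW l0).
pose E := [set Dist b | b in B].
have Eub : has_ubound E.
  exists (M + `|a0|) => _ [b Bb <-].
  apply: le_trans (D1 _ _ Aa0) _; apply: le_trans (ler_normB _ _) _.
  by rewrite lerD2r HM.
suff Dz b : B b -> Dist b = 0.
  move=> b Bb; apply: Acl => U /nbhs_ballP [e e0 sub].
  have : inf [set `|b - a| | a in A] < e by rewrite -/(Dist b) Dz.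
  move=> /(inf_lt (Dne b)) [_ [a Aa <-] lt].
  exists a; split => //; apply: sub.
  by rewrite -ball_normE /ball_ /=.
move=> Bb; apply/eqP; rewrite eq_le D0 andbT.
have EK b' : B b' -> Dist b' <= sup E by move=> Bb'; apply: ub_le_sup => //; exists b'.
have K0 : 0 <= sup E by apply: le_trans (D0 b) (EK b Bb).
have KL : sup E <= L * sup E.
  apply: ge_sup; first by exists (Dist b), b.
  move=> _ [c Bc <-]; have [i [c' [Bc' ->]]] := BS c Bc.
  apply: le_trans (D3 _ _) _; apply: le_trans (ler_wpM2l _ (EK _ Bc')) _.
    by case/andP: (hlam i) => /ltW.
  by rewrite ler_wpM2r.
have : sup E <= 0.
  have : (1 - L) * sup E <= 0 by rewrite mulrBl mul1r subr_le0.
  by rewrite pmulr_rle0 // subr_gt0.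
by move=> K; apply: le_trans (EK b Bb) K.
Qed.
Lemma delta_sum (R : realType) n (i : 'I_n) (c : R) :
  \sum_(k < n) ((k == i)%:R * c) = c.
Proof.
rewrite (bigD1 i) //= eqxx mul1r big1 ?addr0 // => k /negbTE ->.
by rewrite mul0r.
Qed.

Lemma delta_sumZ (R : realType) d n (i : 'I_n) (c : R) (p : 'I_n -> 'rV[R]_d) :
  \sum_(k < n) (((k == i)%:R * c) *: p k) = c *: p i.
Proof.
rewrite (bigD1 i) //= eqxx mul1r big1 ?addr0 // => k /negbTE ->.
by rewrite mul0r scale0r.
Qed.

Lemma conv_S1 (R : realType) d n (p : 'I_n -> 'rV[R]_d) (l : R) i c :
  0 <= l <= 1 -> conv_hull p c -> conv_hull p (Smap l (p i) c).
Proof.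
move=> /andP[l0 l1] [t [t0 [t1 ->]]].
exists (fun k => l * t k + (k == i)%:R * (1 - l)); split; [|split].
- by move=> k; rewrite addr_ge0 ?mulr_ge0 ?subr_ge0.
- by rewrite big_split /= -mulr_sumr t1 mulr1 delta_sum addrC subrK.
- rewrite /Smap scaler_sumr -(delta_sumZ i (1 - l) p) -big_split /=.
  by apply: eq_bigr => k _; rewrite scalerDl scalerA.
Qed.

Lemma conv_S2 (R : realType) d (p : 'I_d.+1 -> 'rV[R]_d) (lam : 'I_d.+1 -> R) c :
  (forall i, 0 < lam i < 1) -> d%:R <= \sum_(i < d.+1) lam i ->
  conv_hull p c -> exists i c', conv_hull p c' /\ c = Smap (lam i) (p i) c'.
Proof.
move=> hlam hsum [t [t0 [t1 ->]]].
have [i ti] : exists i, 1 - lam i <= t i.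
  apply/not_existsP => hn.
  have : \sum_(i < d.+1) t i < \sum_(i < d.+1) (1 - lam i).
    apply: ltr_sum; first by apply/hasP; exists ord0; rewrite ?mem_index_enum.
    by move=> k _; rewrite ltNge; apply/negP => /hn.
  rewrite sumrB sumr_const card_ord t1 -natr1 => h; lra.
have /andP[l0 l1] := hlam i.
exists i, (\sum_(k < d.+1) ((t k - (k == i)%:R * (1 - lam i)) / lam i) *: p k).
split.
  exists (fun k => (t k - (k == i)%:R * (1 - lam i)) / lam i); split; [|split] => //.
  - move=> k; apply: divr_ge0; last exact: ltW.
    by case: eqP => [->|_]; rewrite /= ?mul1r ?mul0r ?subr_ge0 ?subr0.
  - by rewrite -mulr_suml sumrB t1 delta_sum opprB addrC subrK divff ?gt_eqF.
rewrite /Smap scaler_sumr.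
have -> : \sum_(k < d.+1) lam i *: (((t k - (k == i)%:R * (1 - lam i)) / lam i) *: p k)
   = \sum_(k < d.+1) (t k *: p k - ((k == i)%:R * (1 - lam i)) *: p k).
  apply: eq_bigr => k _.
  by rewrite scalerA mulrCA divff ?mulr1 ?scalerBl // gt_eqF.
rewrite big_split /= sumrN delta_sumZ subrK. done.
Qed.
Lemma sum_cont (T : topologicalType) (K : numFieldType) (V : normedModType K)
  (I : Type) (s : seq I) (P : pred I) (F : I -> T -> V) :
  (forall i, continuous (F i)) -> continuous (fun t => \sum_(i <- s | P i) F i t).
Proof.
move=> hF; elim: s => [|a s IH].
  under eq_fun do rewrite big_nil.
  exact: cst_continuous.
under eq_fun do rewrite big_cons.
case: (P a) => //.
move=> x; apply: (@continuousD _ _ _ (F a) (fun t => \sum_(i <- s | P i) F i t)).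
  exact: hF.
exact: IH.
Qed.

Lemma conv_compact (R : realType) d n (p : 'I_n -> 'rV[R]_d) :
  compact (conv_hull p).
Proof.
pose S := [set t : 'rV[R]_n | forall i, `[0, 1] (t ord0 i)] `&`
          (fun t : 'rV[R]_n => \sum_(i < n) t ord0 i) @^-1` [set 1].
pose f := fun t : 'rV[R]_n => \sum_(i < n) t ord0 i *: p i.
have cS : compact S.
  apply: compact_closedI.
    have := @rV_compact R n (fun=> `[0, 1]%classic) (fun=> @segment_compact R 0 1).
    exact.
  apply: preimage_closed; last exact: closed_eq.
  move=> x _; apply: sum_cont => i.
  exact: coord_continuous.
have -> : conv_hull p = f @` S.
  apply/seteqP; split.
    move=> x [t [t0 [t1 ->]]]; exists (\row_i t i).
      split; last by rewrite /= (eq_bigr t) // => i _; rewrite mxE.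
      move=> i; rewrite mxE /= in_itv /= t0 /=.
      rewrite -t1 (bigD1 i) //= lerDl sumr_ge0 //.
    by rewrite /f; apply: eq_bigr => i _; rewrite mxE.
  move=> _ [t [t01 t1] <-]; exists (fun i => t ord0 i); split; [|split] => //.
  by move=> i; have := t01 i; rewrite /= in_itv /= => /andP[].
apply: continuous_compact => //; apply: continuous_subspaceT.
rewrite /f; apply: sum_cont => i.
move=> x; apply: (@continuousZr_tmp _ _ _ (fun t : 'rV[R]_n => t ord0 i)).
exact: coord_continuous.
Qed.

Unset Implicit Arguments.

Theorem lemma2p3 (R : realType) (d : nat) (p : 'I_d.+1 -> 'rV[R]_d)
    (lam : 'I_d.+1 -> R) :
  not_in_hyperplane p ->
  (forall i, 0 < lam i < 1) ->
  d%:R <= \sum_(i < d.+1) lam i ->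
  (* the convex hull is a non-empty compact invariant set ... *)
  (conv_hull p !=set0 /\ compact (conv_hull p) /\
   conv_hull p = \bigcup_(i in [set: 'I_d.+1]) (Smap (lam i) (p i) @` conv_hull p)) /\
  (* ... and every non-empty compact invariant set equals it *)
  (forall X : set 'rV[R]_d, X !=set0 -> compact X ->
     X = \bigcup_(i in [set: 'I_d.+1]) (Smap (lam i) (p i) @` X) ->
     X = conv_hull p).
Proof.
move=> _ hlam hsum.
have l01 i : 0 <= lam i <= 1.
  by case/andP: (hlam i) => /ltW -> /ltW ->.
have cC : compact (conv_hull p) := @conv_compact _ _ _ p.
have Cne : conv_hull p !=set0.
  exists (p ord0), (fun k => (k == ord0)%:R * 1); split; [|split].
  - by move=> k; rewrite mulr1 ler0n.
  - exact: delta_sum.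
  - by rewrite delta_sumZ scale1r.
have Ceq : conv_hull p =
    \bigcup_(i in [set: 'I_d.+1]) (Smap (lam i) (p i) @` conv_hull p).
  apply/seteqP; split.
    move=> c Cc; have [i [c' [Cc' ->]]] := conv_S2 hlam hsum Cc.
    by exists i => //; exists c'.
  by move=> c [i _ [c' Cc' <-]]; exact: conv_S1 (l01 i) Cc'.
split; first by [].
move=> X Xne cX Xeq.
have clX : closed X by apply: compact_closed.
have clC : closed (conv_hull p) by apply: compact_closed.
apply/seteqP; split.
- apply: (attract hlam clC Cne (compact_bounded cX)).
    by move=> i a Ca; exact: conv_S1 (l01 i) Ca.
  move=> b Xb.
  have : (\bigcup_(i in [set: 'I_d.+1]) (Smap (lam i) (p i) @` X)) b by rewrite -Xeq.
  by case=> i _ [b' Xb' <-]; exists i, b'.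
- apply: (attract hlam clX Xne (compact_bounded cC)).
    by move=> i a Xa; rewrite Xeq; exists i => //; exists a.
  by move=> c Cc; exact: conv_S2 hlam hsum Cc.
Qed.
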